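(* Let $(Y^*,Y,X,W)$ be random variables with $Y^*,Y\in\{0,1\}$, $X=(\tilde X,Z)$ with $\tilde X\in\tilde{\mathcal X}$, $Z$ taking values in a finite set $\mathcal Z$, and $W$ taking values in a finite set of reals $\mathcal W$ with maximum element $w_m$. Let $p^*(x)=\Pr(Y^*=1\mid X=x)$, write $p^*(\tilde x,z)=p^*(x)$ for $x=(\tilde x,z)$, and $p_W(\tilde x,z,w)=\Pr(Y=1\mid \tilde X=\tilde x,Z=z,W=w)$. Assume: (1) (Exclusion) for all $x=(\tilde x,z)$, $w\in\mathcal W$, $y\in\{0,1\}$: $\Pr(Y^*=1\mid x,w)=p^*(x)$ and $\Pr(Y=1-y\mid Y^*=y,x,w)=\Pr(Y=1-y\mid Y^*=y,\tilde x,w)$; (2) (Degree of misreporting) for all $\tilde x,w$: $\Pr(Y=0\mid Y^*=1,\tilde x,w)+\Pr(Y=1\mid Y^*=0,\tilde x,w)\le1$; (3) (Monotonicity and relevance) for all $\tilde x$, $w_1>w_2$ in $\mathcal W$ and $y\in\{0,1\}$: $\Pr(Y=1-y\mid Y^*=y,\tilde x,w_1)\le\Pr(Y=1-y\mid Y^*=y,\tilde x,w_2)$, and there exists $y\in\{0,1\}$ for which this inequality is strict; (4) (Relevance) for every $\tilde x$ there exist $z_1\neq z_2$ in $\mathcal Z$ with $p^*(\tilde x,z_1)\ne p^*(\tilde x,z_2)$. For $\tilde x$ fixed, with $z_1,z_2$ as in (4), define for $w\in\mathcal W$ $$q_1(\tilde x,w_m,w)=\frac{p_W(\tilde x,z_1,w_m)-p_W(\tilde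 x,z_2,w_m)}{p_W(\tilde x,z_1,w)-p_W(\tilde x,z_2,w)},\qquad R(\tilde x,w)=\frac{q_1(\tilde x,w_m,w)p_W(\tilde x,z_1,w)-p_W(\tilde x,z_1,w_m)}{q_1(\tilde x,w_m,w)-1},$$ and $$U_{\alpha_1}(\tilde x,w_m)=1-\sup_{z\in\mathcal Z,\ w<w_m}\{R(\tilde x,w),\ p_W(\tilde x,z,w_m)\},\qquad U_{\alpha_0}(\tilde x,w_m)=\inf_{z\in\mathcal Z,\ w<w_m}\{R(\tilde x,w),\ p_W(\tilde x,z,w_m)\}.$$ Then for every $\tilde x\in\tilde{\mathcal X}$ and $y\in\{0,1\}$, $\Pr(Y=1-y\mid Y^*=y,\tilde x,w_m)\in[0,U_{\alpha_y}(\tilde x,w_m)]$.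
   Context: $Y^*$ is the true (unobserved) binary outcome and $Y$ the observed, possibly misreported outcome; $Z$ is an instrument for the true outcome and $W$ an instrument for the misreporting probabilities. Conditioning on $\tilde x,w$ means conditioning on $\tilde X=\tilde x,W=w$. The sup/inf in $U_{\alpha_y}$ is over all values $R(\tilde x,w)$ with $w\in\mathcal W$, $w<w_m$, together with all values $p_W(\tilde x,z,w_m)$, $z\in\mathcal Z$. *)

(* Defs.v *)
From HB Require Import structures.
From mathcomp Require Import all_boot all_order all_algebra.
From mathcomp Require Import boolp classical_sets reals.
Set Implicit Arguments. Unset Strict Implicit. Unset Printing Implicit Defensive.
Import Order.TTheory GRing.Theory Num.Theory.
Local Open Scope ring_scope.
Local Open Scope classical_set_scope.

(* For every
   value xt, [P xt] is the conditional joint probability mass function of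
   (Y*, Y, Z, W) given X~ = xt, over the finite space
   Obs = bool * bool * Z * W, with the coordinates (Y*, Y, Z, W).
   W is a finite type whose elements are labelled by distinct reals [wv]. *)

Section Model.
Variables (R : realType) (Xt : Type) (Z W : finType).
Variable P : Xt -> bool * bool * Z * W -> R.

Definition obs := (bool * bool * Z * W)%type.
Definition ystar (e : obs) : bool := e.1.1.1.
Definition yobs (e : obs) : bool := e.1.1.2.
Definition zof (e : obs) : Z := e.1.2.
Definition wof (e : obs) : W := e.2.

Definition prob (xt : Xt) (A : pred obs) : R := \sum_(e : obs | A e) P xt e.

(* Pr(A | B, X~ = xt)  (ratio definition; division by 0 gives 0) *)
Definition cprob (xt : Xt) (A B : pred obs) : R :=
  prob xt (predI A B) / prob xt B.

Definition pstar (xt : Xt) (z : Z) : R :=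
  cprob xt (fun e => ystar e) (fun e => zof e == z).

Definition pstar_w (xt : Xt) (z : Z) (w : W) : R :=
  cprob xt (fun e => ystar e) (fun e => (zof e == z) && (wof e == w)).

Definition miscl_xzw (y : bool) (xt : Xt) (z : Z) (w : W) : R :=
  cprob xt (fun e => yobs e != y)
    (fun e => [&& ystar e == y, zof e == z & wof e == w]).

Definition alpha (y : bool) (xt : Xt) (w : W) : R :=
  cprob xt (fun e => yobs e != y) (fun e => (ystar e == y) && (wof e == w)).

Definition pW (xt : Xt) (z : Z) (w : W) : R :=
  cprob xt (fun e => yobs e) (fun e => (zof e == z) && (wof e == w)).

Definition q1 (z1 z2 : Z) (xt : Xt) (wm w : W) : R :=
  (pW xt z1 wm - pW xt z2 wm) / (pW xt z1 w - pW xt z2 w).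

Definition Rfun (z1 z2 : Z) (xt : Xt) (wm w : W) : R :=
  (q1 z1 z2 xt wm w * pW xt z1 w - pW xt z1 wm) / (q1 z1 z2 xt wm w - 1).

Variable wv : W -> R.

Definition Uset (z1 z2 : Z) (xt : Xt) (wm : W) : set R :=
  [set r | (exists w : W, wv w < wv wm /\ r = Rfun z1 z2 xt wm w)
           \/ (exists z : Z, r = pW xt z wm)].

Definition U_alpha (y : bool) (z1 z2 : Z) (xt : Xt) (wm : W) : R :=
  if y then 1 - sup (Uset z1 z2 xt wm) else inf (Uset z1 z2 xt wm).

End Model.

(* Main.v *)
Require Import Defs.
From HB Require Import structures.
From mathcomp Require Import all_boot all_order all_algebra.
From mathcomp Require Import boolp classical_sets reals.
From mathcomp Require Import ring lra.

Import Order.TTheory GRing.Theory Num.Theory.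
Local Open Scope ring_scope.


Section H.
Variables (R : realType) (Xt : Type) (Z W : finType).
Variable P : Xt -> bool * bool * Z * W -> R.

Lemma prob_list xt (A : pred (obs Z W)) (s : seq (obs Z W)) :
  uniq s -> (forall e, A e = (e \in s)) ->
  prob P xt A = \sum_(e <- s) P xt e.
Proof.
move=> us hA; rewrite /prob big_uniq //; apply: eq_bigl => e; exact: hA.
Qed.

Ltac predtac := let ys := fresh in let yo := fresh in
  move=> [[[ys yo] ?] ?]; rewrite /ystar/yobs/zof/wof /= !inE ?xpair_eqE;
  case: ys yo => [] [] /=; rewrite ?andbF ?andbT ?orbF ?andFb ?orFb //.

Lemma prob_yzw xt y z w :
  prob P xt (fun e => [&& ystar e == y, zof e == z & wof e == w]) =
  P xt (y, true, z, w) + P xt (y, false, z, w).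
Proof.
rewrite (@prob_list _ _ [:: (y, true, z, w); (y, false, z, w)]).
  by rewrite !big_cons big_nil addr0.
  by rewrite /= ?inE ?xpair_eqE ?eqxx.
by case: y; predtac.
Qed.

Lemma prob_mis xt y z w :
  prob P xt (predI (fun e => yobs e != y)
     (fun e => [&& ystar e == y, zof e == z & wof e == w])) =
  P xt (y, ~~ y, z, w).
Proof.
rewrite (@prob_list _ _ [:: (y, ~~ y, z, w)]).
  by rewrite !big_cons big_nil addr0.
  by [].
by case: y; predtac.
Qed.

Lemma prob_zw xt z w :
  prob P xt (fun e => (zof e == z) && (wof e == w)) =
  P xt (true, true, z, w) + P xt (true, false, z, w) +
  (P xt (false, true, z, w) + P xt (false, false, z, w)).
Proof.
rewrite (@prob_list _ _ [:: (true, true, z, w); (true, false, z, w);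
   (false, true, z, w); (false, false, z, w)]).
  by rewrite !big_cons big_nil addr0 !addrA.
  by rewrite /= ?inE ?xpair_eqE ?eqxx.
predtac.
Qed.

Lemma prob_s xt z w :
  prob P xt (predI (fun e => ystar e) (fun e => (zof e == z) && (wof e == w))) =
  P xt (true, true, z, w) + P xt (true, false, z, w).
Proof.
rewrite (@prob_list _ _ [:: (true, true, z, w); (true, false, z, w)]).
  by rewrite !big_cons big_nil addr0.
  by rewrite /= ?inE ?xpair_eqE ?eqxx.
predtac.
Qed.

Lemma prob_o xt z w :
  prob P xt (predI (fun e => yobs e) (fun e => (zof e == z) && (wof e == w))) =
  P xt (true, true, z, w) + P xt (false, true, z, w).
Proof.
rewrite (@prob_list _ _ [:: (true, true, z, w); (false, true, z, w)]).
  by rewrite !big_cons big_nil addr0.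
  by rewrite /= ?inE ?xpair_eqE ?eqxx.
predtac.
Qed.


Lemma key xt z w
  (P_ge0 : forall xt e, 0 <= P xt e)
  (P_pos : forall xt (y : bool) (z : Z) (w : W),
     0 < prob P xt (fun e => [&& ystar e == y, zof e == z & wof e == w]))
  (H1a : forall xt z w, pstar_w P xt z w = pstar P xt z)
  (H1b : forall xt z w y, miscl_xzw P y xt z w = alpha P y xt w) :
  [/\ pW P xt z w = pstar P xt z * (1 - alpha P true xt w - alpha P false xt w)
        + alpha P false xt w,
      0 <= pstar P xt z <= 1 &
      forall y, 0 <= alpha P y xt w <= 1].
Proof.
have Pt := P_pos xt true z w; have Pf := P_pos xt false z w.
rewrite !prob_yzw /= in Pt Pf.
have ea : forall y, alpha P y xt w =
   P xt (y, ~~ y, z, w) / (P xt (y, true, z, w) + P xt (y, false, z, w)).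
  by move=> y; rewrite -(H1b xt z w y) /miscl_xzw /cprob prob_mis prob_yzw.
have eps : pstar P xt z = (P xt (true, true, z, w) + P xt (true, false, z, w)) /
   (P xt (true, true, z, w) + P xt (true, false, z, w) +
  (P xt (false, true, z, w) + P xt (false, false, z, w))).
  by rewrite -(H1a xt z w) /pstar_w /cprob prob_s prob_zw.
have epw : pW P xt z w = (P xt (true, true, z, w) + P xt (false, true, z, w)) /
   (P xt (true, true, z, w) + P xt (true, false, z, w) +
  (P xt (false, true, z, w) + P xt (false, false, z, w))).
  by rewrite /pW /cprob prob_o prob_zw.
have g1 := P_ge0 xt (true, true, z, w); have g2 := P_ge0 xt (true, false, z, w).
have g3 := P_ge0 xt (false, true, z, w); have g4 := P_ge0 xt (false, false, z, w).
split.
- rewrite epw eps !ea /=. field.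
  by rewrite !gt_eqF //; lra.
- rewrite eps; apply/andP; split.
    by apply: divr_ge0; lra.
  rewrite ler_pdivrMr; last lra.
  rewrite mul1r; lra.
- move=> y; rewrite ea; have Py := P_pos xt y z w; rewrite prob_yzw in Py.
  have h1 := P_ge0 xt (y, true, z, w); have h2 := P_ge0 xt (y, false, z, w).
  apply/andP; split; first by apply: divr_ge0 => //; lra.
  rewrite ler_pdivrMr // mul1r; move: h1 h2; case: y {Py ea} => /= h1 h2; lra.
Qed.

End H.

Theorem lemma1 (R : realType) (Xt : Type) (Z W : finType)
  (P : Xt -> bool * bool * Z * W -> R) (wv : W -> R) (wm : W)
  (* P xt is a probability mass function for each xt *)
  (P_ge0 : forall xt e, 0 <= P xt e)
  (P_sum1 : forall xt, \sum_(e : bool * bool * Z * W) P xt e = 1)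
  (* all conditioning events have positive probability *)
  (P_pos : forall xt (y : bool) (z : Z) (w : W),
     0 < prob P xt (fun e => [&& ystar e == y, zof e == z & wof e == w]))
  (* W is a finite set of reals with maximum element wm *)
  (wv_inj : injective wv)
  (wm_max : forall w, wv w <= wv wm)
  (* (1) exclusion *)
  (H1a : forall xt z w, pstar_w P xt z w = pstar P xt z)
  (H1b : forall xt z w y, miscl_xzw P y xt z w = alpha P y xt w)
  (* (2) degree of misreporting *)
  (H2 : forall xt w, alpha P true xt w + alpha P false xt w <= 1)
  (* (3) monotonicity and relevance *)
  (H3a : forall xt (w1 w2 : W) (y : bool), wv w2 < wv w1 ->
     alpha P y xt w1 <= alpha P y xt w2)
  (H3b : forall xt (w1 w2 : W), wv w2 < wv w1 ->
     exists y : bool, alpha P y xt w1 < alpha P y xt w2)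
  (* (4) relevance *)
  (H4 : forall xt, exists z1 z2 : Z, z1 != z2 /\ pstar P xt z1 != pstar P xt z2) :
  forall (xt : Xt) (z1 z2 : Z), z1 != z2 -> pstar P xt z1 != pstar P xt z2 ->
  forall y : bool,
    0 <= alpha P y xt wm <= U_alpha P wv y z1 z2 xt wm.
Proof.
move=> xt z1 z2 hz hp y.
have K := fun xt z w => @key R Xt Z W P xt z w P_ge0 P_pos H1a H1b.
set a := alpha P false xt wm; set b := alpha P true xt wm.
have [_ _ hab] := K xt z1 wm.
have /andP[ha0 ha1] := hab false; have /andP[hb0 hb1] := hab true.
have H2m := H2 xt wm; rewrite -/a -/b in H2m.
have zb : forall z, a <= pW P xt z wm <= 1 - b.
  move=> z; have [-> /andP[p0 p1] _] := K xt z wm.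
  rewrite -/a -/b; apply/andP; split; nra.
have bound : forall r, Uset P wv z1 z2 xt wm r -> a <= r <= 1 - b.
  move=> r [[w [hw ->]] | [z ->]]; last exact: zb.
  have [e1 /andP[s0 s1] hw'] := K xt z1 w.
  have [e2 /andP[r0 r1] _] := K xt z2 w.
  have [e3 _ _] := K xt z1 wm.
  have [e4 _ _] := K xt z2 wm.
  set A := alpha P false xt w in e1 e2 hw' *; set B := alpha P true xt w in e1 e2 hw' *.
  have hA : a <= A := H3a xt wm w false hw.
  have hB : b <= B := H3a xt wm w true hw.
  have H2w := H2 xt w.
  have hD : 1 - A - B < 1 - a - b.
    by have [[] hy] := H3b xt wm w hw; rewrite -/a -/b -/A -/B in hy; lra.
  have hp' : pstar P xt z1 - pstar P xt z2 != 0 by rewrite subr_eq0.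
  set p1 := pstar P xt z1 in e1 e3 hp' *; set p2 := pstar P xt z2 in e2 e4 hp' *.
  case: (eqVneq (1 - B - A) 0) => hD0.
    have -> : Rfun P z1 z2 xt wm w = pW P xt z1 wm.
      rewrite /Rfun /Defs.q1 e1 e2 hD0 !mulr0 subrr invr0 mulr0 mul0r sub0r.
      by rewrite sub0r invrN1 mulrN1 opprK.
    exact: zb.
  have ER : Rfun P z1 z2 xt wm w =
      ((1 - a - b) * A - a * (1 - A - B)) / ((1 - a - b) - (1 - A - B)).
    rewrite /Rfun /Defs.q1 e1 e2 e3 e4 -/a -/b.
    field.
    apply/and3P; split.
    - apply: lt0r_neq0; lra.
    - rewrite (_ : p1 * (1 - B - A) + A - (p2 * (1 - B - A) + A) = (p1 - p2) * (1 - B - A)); last ring.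
      by rewrite mulf_neq0.
    - rewrite (_ : _ + -1 * _ = (p1 - p2) * ((1 - b - a) - (1 - B - A))); last ring.
      rewrite mulf_neq0 //; apply: lt0r_neq0; lra.
  rewrite ER; apply/andP; split.
    rewrite ler_pdivlMr; last lra.
    nra.
  rewrite ler_pdivrMr; last lra.
  have hh : 0 <= (B - b) * (1 - a - b) by apply: mulr_ge0; lra.
  nra.
have ne : exists r, Uset P wv z1 z2 xt wm r.
  by exists (pW P xt z1 wm); right; exists z1.
apply/andP; split; first by case: y; [exact: hb0 | exact: ha0].
case: y; rewrite /U_alpha -/a -/b.
  suff : sup (Uset P wv z1 z2 xt wm) <= 1 - b by lra.
  by apply: ge_sup => // r /bound /andP[].
by apply: lb_le_inf => // r /bound /andP[].
Qed.
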